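(* Let $(A,f)$ be a finite-dimensional quadratic Lie algebra over a field $\mathbb{K}$ of characteristic zero, let $d$ be an $f$-skew-symmetric derivation of $A$, and let $(A_b,f_b)$ be the one-dimensional double extension of $(A,f)$ by $(b,d)$. Then $A_b$ is $2$-step nilpotent if and only if $0\neq \mathrm{im}\,d+A^2\subseteq Z(A)\cap\ker d$.
   Context: A quadratic Lie algebra $(A,f)$ is a Lie algebra with a non-degenerate symmetric bilinear form $f$ satisfying $f([x,y],z)+f(y,[x,z])=0$. A derivation $d$ is $f$-skew-symmetric if $f(d(x),y)+f(x,d(y))=0$. The one-dimensional double extension of $(A,f)$ by $(b,d)$ is $A_b=\mathbb{K}b\oplus A\oplus\mathbb{K}\beta$ with bracket $[\lambda b+a+\mu\beta,\lambda' b+a'+\mu'\beta]=\lambda d(a')-\lambda' d(a)+[a,a']_A+f(d(a),a')\beta$ and form $f_b(\lambda b+a+\mu\beta,\lambda' b+a'+\mu'\beta)=\lambda\mu'+\lambda'\mu+f(a,a')$. A Lie algebra $L$ is $2$-step nilpotent if $[L,[L,L]]=0$ and $[L,L]\neq 0$. *)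

(* Defs.v *)
From HB Require Import structures.
From mathcomp Require Import all_boot all_order all_algebra.
Set Implicit Arguments. Unset Strict Implicit. Unset Printing Implicit Defensive.
Import GRing.Theory.
Local Open Scope ring_scope.

Definition bilinear_br (K : fieldType) (A : lmodType K) (br : A -> A -> A) :=
  (forall c x y z, br (c *: x + y) z = c *: br x z + br y z) /\
  (forall c x y z, br x (c *: y + z) = c *: br x y + br x z).

Definition bilinear_form (K : fieldType) (A : lmodType K) (f : A -> A -> K) :=
  (forall c x y z, f (c *: x + y) z = c * f x z + f y z) /\
  (forall c x y z, f x (c *: y + z) = c * f x y + f x z).

Definition is_lie (K : fieldType) (A : lmodType K) (br : A -> A -> A) :=
  [/\ bilinear_br br,
      (forall x, br x x = 0) &
      (forall x y z, br x (br y z) + br y (br z x) + br z (br x y) = 0)].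

Definition is_quadratic_lie (K : fieldType) (A : lmodType K)
    (br : A -> A -> A) (f : A -> A -> K) :=
  [/\ is_lie br, bilinear_form f,
      (forall x y, f x y = f y x),
      (forall x, (forall y, f x y = 0) -> x = 0) &
      (forall x y z, f (br x y) z + f y (br x z) = 0)].

Definition is_derivation (K : fieldType) (A : lmodType K)
    (br : A -> A -> A) (d : A -> A) :=
  (forall c x y, d (c *: x + y) = c *: d x + d y) /\
  (forall x y, d (br x y) = br (d x) y + br x (d y)).

Definition is_f_skew (K : fieldType) (A : lmodType K) (f : A -> A -> K) (d : A -> A) :=
  forall x y, f (d x) y + f x (d y) = 0.

(* Carrier of the one-dimensional double extension A_b = K b (+) A (+) K beta;
   the element ((lam, a), mu) stands for lam b + a + mu beta. *)
Definition dext (K : fieldType) (A : lmodType K) : Type := (K * A * K)%type.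

Definition dext_br (K : fieldType) (A : lmodType K) (br : A -> A -> A)
    (f : A -> A -> K) (d : A -> A) (u v : K * A * K) : K * A * K :=
  let: ((l, a), m) := u in
  let: ((l', a'), m') := v in
  ((0, l *: d a' - l' *: d a + br a a'), f (d a) a').

Definition dext_form (K : fieldType) (A : lmodType K) (f : A -> A -> K)
    (u v : K * A * K) : K :=
  let: ((l, a), m) := u in
  let: ((l', a'), m') := v in
  l * m' + l' * m + f a a'.

(* The set of finite sums of brackets [x_i, y_i] with x_i in P and y_i in Q,
   i.e. the subspace [P, Q] spanned by such brackets (scalars can be absorbed
   by bilinearity when P, Q are subspaces). *)
Definition bracket_span (V : zmodType) (br : V -> V -> V) (P Q : V -> Prop) : V -> Prop :=
  fun x => exists n (xs ys : 'I_n -> V),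
    [/\ (forall i, P (xs i)), (forall i, Q (ys i)) & x = \sum_(i < n) br (xs i) (ys i)].

Definition derived (V : zmodType) (br : V -> V -> V) : V -> Prop :=
  bracket_span br (fun _ => True) (fun _ => True).

Definition two_step_nilpotent (V : zmodType) (br : V -> V -> V) : Prop :=
  (forall x, bracket_span br (fun _ => True) (derived br) x -> x = 0) /\
  (exists x, derived br x /\ x <> 0).

Definition imd_plus_derived (V : zmodType) (br : V -> V -> V) (d : V -> V) : V -> Prop :=
  fun x => exists y z, derived br z /\ x = d y + z.

Definition lie_center (V : zmodType) (br : V -> V -> V) : V -> Prop :=
  fun x => forall y, br x y = 0.

(* Main.v *)
Require Import Defs.
From HB Require Import structures.
From mathcomp Require Import all_boot all_order all_algebra.
Import GRing.Theory.
Local Open Scope ring_scope.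
Set Implicit Arguments. Unset Strict Implicit.

Lemma sum_fst (U V : zmodType) n (F : 'I_n -> U * V) :
  (\sum_(i < n) F i).1 = \sum_(i < n) (F i).1.
Proof. by apply: (big_morph fst). Qed.
Lemma sum_snd (U V : zmodType) n (F : 'I_n -> U * V) :
  (\sum_(i < n) F i).2 = \sum_(i < n) (F i).2.
Proof. by apply: (big_morph snd). Qed.

Lemma dext_brE (K : fieldType) (A : lmodType K) br f d (u v : K * A * K) :
  dext_br br f d u v = ((0, u.1.1 *: d v.1.2 - v.1.1 *: d u.1.2 + br u.1.2 v.1.2),
     f (d u.1.2) v.1.2).
Proof. by case: u => [[l a] m]; case: v => [[l' a'] m']. Qed.

Lemma der_add (K : fieldType) (A : lmodType K) (br : A -> A -> A) d :
  is_derivation br d -> forall x y, d (x + y) = d x + d y.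
Proof. rewrite /is_derivation => -[H _] x y; by rewrite -{1}(scale1r x) H scale1r. Qed.
Lemma der0 (K : fieldType) (A : lmodType K) (br : A -> A -> A) d :
  is_derivation br d -> d 0 = 0.
Proof. move=> H; have h := der_add H 0 0; rewrite addr0 in h.
by apply: (addrI (d 0)); rewrite -h addr0. Qed.
Lemma derZ (K : fieldType) (A : lmodType K) (br : A -> A -> A) d :
  is_derivation br d -> forall c x, d (c *: x) = c *: d x.
Proof. move=> H c x; have := H.1 c x 0; by rewrite !addr0 (der0 H) addr0. Qed.
Lemma derB (K : fieldType) (A : lmodType K) (br : A -> A -> A) d :
  is_derivation br d -> forall x y, d (x - y) = d x - d y.
Proof. move=> H x y; by rewrite (der_add H) -scaleN1r (derZ H) scaleN1r. Qed.
Lemma der_sum (K : fieldType) (A : lmodType K) (br : A -> A -> A) d :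
  is_derivation br d -> forall n (F : 'I_n -> A), d (\sum_(i < n) F i) = \sum_(i < n) d (F i).
Proof. move=> H n F; apply: (big_morph d (der_add H) (der0 H)). Qed.

Lemma form0l (K : fieldType) (A : lmodType K) (f : A -> A -> K) :
  bilinear_form f -> forall y, f 0 y = 0.
Proof. rewrite /bilinear_form => -[H _] y; have h := H 1 0 0 y; rewrite scale1r addr0 mul1r in h.
by apply: (addrI (f 0 y)); rewrite -h addr0. Qed.

Lemma br_add_l (K : fieldType) (A : lmodType K) (br : A -> A -> A) :
  bilinear_br br -> forall x y z, br (x + y) z = br x z + br y z.
Proof. by move=> [H _] x y z; rewrite -{1}(scale1r x) H scale1r. Qed.
Lemma br_add_r (K : fieldType) (A : lmodType K) (br : A -> A -> A) :
  bilinear_br br -> forall x y z, br x (y + z) = br x y + br x z.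
Proof. by move=> [_ H] x y z; rewrite -{1}(scale1r y) H scale1r. Qed.
Lemma br0l (K : fieldType) (A : lmodType K) (br : A -> A -> A) :
  bilinear_br br -> forall y, br 0 y = 0.
Proof. move=> H y; have h := br_add_l H 0 0 y; rewrite addr0 in h.
by apply: (addrI (br 0 y)); rewrite -h addr0. Qed.
Lemma br_anti (K : fieldType) (A : lmodType K) (br : A -> A -> A) :
  is_lie br -> forall x y, br x y = - br y x.
Proof. move=> [Hb Ha _] x y; have := Ha (x + y).
rewrite (br_add_l Hb) !(br_add_r Hb) !Ha add0r addr0 => /eqP.
by rewrite addr_eq0 => /eqP. Qed.

Lemma derived_ext (K : fieldType) (A : lmodType K) br f d
  (Hd : is_derivation br d) (w : K * A * K) :
  derived (dext_br br f d) w -> w.1.1 = 0 /\ imd_plus_derived br d w.1.2.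
Proof.
move=> [n [xs [ys [_ _ ->]]]]; split.
  by rewrite !sum_fst; apply: big1 => i _; rewrite dext_brE.
rewrite sum_fst sum_snd.
exists (\sum_(i < n) ((xs i).1.1 *: (ys i).1.2 - (ys i).1.1 *: (xs i).1.2)),
  (\sum_(i < n) br (xs i).1.2 (ys i).1.2); split.
  by exists n, (fun i => (xs i).1.2), (fun i => (ys i).1.2); split.
rewrite (der_sum Hd) -big_split /=; apply: eq_bigr => i _.
by rewrite dext_brE /= (derB Hd) !(derZ Hd).
Qed.

Lemma ext_derived (K : fieldType) (A : lmodType K) br f d
  (Hd : is_derivation br d) (Hb : bilinear_br br) x :
  imd_plus_derived br d x ->
  exists w : K * A * K, derived (dext_br br f d) w /\ w.1.2 = x.
Proof.
move=> [y [z [[n [xs [ys [_ _ ->]]]] ->]]].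
pose xs' := fun i : 'I_n.+1 =>
  if unlift ord0 i is Some j then ((0 : K, xs j), 0 : K) else ((1 : K, 0 : A), 0 : K).
pose ys' := fun i : 'I_n.+1 =>
  if unlift ord0 i is Some j then ((0 : K, ys j), 0 : K) else ((0 : K, y), 0 : K).
exists (\sum_(i < n.+1) dext_br br f d (xs' i) (ys' i)); split.
  by exists n.+1, xs', ys'; split.
rewrite sum_fst sum_snd big_ord_recl /= /xs' /ys' unlift_none.
rewrite dext_brE /= (br0l Hb) scale0r subr0 scale1r addr0; congr (_ + _).
by apply: eq_bigr => i _; rewrite liftK dext_brE /= !scale0r subr0 add0r.
Qed.

Lemma form0r (K : fieldType) (A : lmodType K) (f : A -> A -> K) :
  bilinear_form f -> (forall x y, f x y = f y x) -> forall y, f y 0 = 0.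
Proof. by move=> Hf Hs y; rewrite Hs form0l. Qed.

Unset Implicit Arguments. Set Strict Implicit.
Theorem proposition2p10 (K : fieldType) (A : vectType K)
    (br : A -> A -> A) (f : A -> A -> K) (d : A -> A) :
  [pchar K] =i pred0 ->
  is_quadratic_lie br f ->
  is_derivation br d ->
  is_f_skew f d ->
  two_step_nilpotent (dext_br br f d) <->
  ((exists x, imd_plus_derived br d x /\ x <> 0) /\
   (forall x, imd_plus_derived br d x -> lie_center br x /\ d x = 0)).
Proof.
move=> _ [Hl Hf Hs Hnd Hinv] Hd Hsk.
have Hb : bilinear_br br by case: Hl.
have d0 := der0 Hd.
split.
- move=> [H1 HW]; split.
  + have [w [dw wne]] := HW.
    have [w1 w2] := derived_ext Hd dw.
    case: (eqVneq w.1.2 0) => [w12|]; last by move=> ne; exists w.1.2; split=> //; apply/eqP.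
    move: dw => [n [xs [ys [_ _ wE]]]].
    case: (boolP [exists i : 'I_n, d (xs i).1.2 != 0]) => [/existsP [i hi]|/existsPn hall].
      exists (d (xs i).1.2); split; last by apply/eqP.
      exists (xs i).1.2, 0; split; last by rewrite addr0.
      by exists 0%N, (fun _ => 0), (fun _ => 0); split=> //; rewrite big_ord0.
    exfalso; apply: wne.
    have w2' : w.2 = 0.
      rewrite wE sum_snd; apply: big1 => i _.
      by rewrite dext_brE /=; move: (hall i) => /negPn /eqP ->; rewrite (form0l Hf).
    by move: w1 w12 w2'; clear w2 wE; case: w => [[a b] c] /= -> -> ->.
  + move=> x hx; have [w [dw wx]] := ext_derived f Hd Hb hx.
    have [w1 _] := derived_ext Hd dw.
    have key : forall u, dext_br br f d u w = 0.
      move=> u; apply: H1; exists 1%N, (fun _ => u), (fun _ => w); split=> //.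
      by rewrite big_ord1.
    have dx : d x = 0.
      have := key ((1, 0), 0); rewrite dext_brE /= w1 scale0r subr0 scale1r (br0l Hb) addr0 wx.
      by case.
    split=> // y; have := key ((0, y), 0); rewrite dext_brE /= w1 !scale0r subr0 add0r wx.
    by case=> h; rewrite (br_anti Hl) h oppr0.
- move=> [[x [hx xne]] Hc]; split.
  + move=> v [n [us [ws [_ dws ->]]]]; apply: big1 => i _.
    have [w1 w2] := derived_ext Hd (dws i).
    have [Hz Hdz] := Hc _ w2.
    rewrite dext_brE w1 Hdz !scale0r subr0 (br_anti Hl) Hz oppr0 addr0.
    have : f (d (us i).1.2) (ws i).1.2 = 0.
      by have := Hsk (us i).1.2 (ws i).1.2; rewrite Hdz (form0r Hf Hs) addr0.
    by move=> ->; rewrite scaler0.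
  + have [w [dw wx]] := ext_derived f Hd Hb hx.
    exists w; split=> // w0; apply: xne; by rewrite -wx w0.
Qed.
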